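(* For each $D\in\mathbb N$ let $H^{(D)}$ be a random Hermitian $D\times D$ matrix satisfying Assumptions S1–S4, with an orthonormal eigenbasis $\phi_1,\dots,\phi_D$, and let $D_0:(0,\infty)^2\to\mathbb N$ be a function such that for all $\tau,\alpha>0$, all $D\ge D_0(\tau,\alpha)$ and all $n\in[D]$, $\mathbb P(\|\phi_n\|_\infty>D^{\tau-1/2})\le D^{-\alpha}$ (such a function exists by the Ajanki–Erdős–Krüger delocalization theorem). Let $\tau>0$, $\alpha>1$, $D\ge D_0(\tau,\alpha)$, and let $B$ be a Hermitian $D\times D$ matrix. Then with probability at least $1-D^{-\alpha+1}$, for every macro state $\mu$, $$|M_{\mu B}|\ge\max\Bigl\{b^+_{\min},\frac{\mathrm{tr}(B^+)}{d_\mu}\Bigl(1-\frac{D-d_\mu}{D^{1-2\tau}}\Bigr)\Bigr\}-\min\Bigl\{b^-_{\max},\frac{\mathrm{tr}(B^-)}{d_\mu}\Bigr\},$$ and for all macro states $\mu,\nu$, $$M_{\mu\nu}\ge\frac{d_\nu}{d_\mu}\Bigl(1-\frac{D-d_\mu}{D^{1-2\tau}}\Bigr)\quad\text{and}\quad M_{\mu\nu}\ge1-\frac{D-d_\nu}{D^{1-2\tau}}.$$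
   Context: Setting: $\mathcal H=\mathbb C^D$ with standard basis; $[D]$ partitioned into consecutive blocks $I_\nu$ (macro states), $\mathcal H_\nu=\mathrm{span}\{|j\rangle:j\in I_\nu\}$, $d_\nu=\dim\mathcal H_\nu$, $P_\nu$ orthogonal projection. Here $M_{\mu B}=\frac1{d_\mu}\sum_{n=1}^D\langle\phi_n|P_\mu|\phi_n\rangle\langle\phi_n|B|\phi_n\rangle$ and $M_{\mu\nu}=M_{\mu P_\nu}$ (for non-degenerate $H$ this equals $\frac1{d_\mu}\sum_e\mathrm{tr}(P_\mu\Pi_eB\Pi_e)$). $B^\pm$ are positive/negative parts of $B$, $b^+_{\min}$ smallest eigenvalue of $B^+$, $b^-_{\max}$ largest eigenvalue of $B^-$. $\|\phi\|_\infty=\max_j|\phi(j)|$. Fix parameters $p,P>0$, $L\in\mathbb N$, and a sequence $(\mu_k)_{k\in\mathbb N}$ of nonnegative reals, independent of $D$. S1: $H^{(D)}=(h_{ij})$ is of Wigner type (centered entries, $(h_{ij})_{i\le j}$ independent) and $\sigma_{ij}^2:=\mathbb E|h_{ij}|^2\le 1/D$ for all $i,j$. S2: the matrix $S=(\sigma_{ij}^2)$ satisfies $(S^L)_{ij}\ge p/D$ for all $i,j$. S3: the unique solution $m=(m_1,\dots,m_D):\mathbb H\to\mathbb H^D$ ($\mathbb H$ the complex upper half-plane) of the vector Dyson equation $-1/m_i(z)=z+\sum_j\sigma_{ij}^2m_j(z)$ satisfies $|m_i(z)|\le P$ for all $i$ and $z\in\mathbb H$. S4: $\mathbb E|h_{ij}|^k\le\mu_k\sigma_{ij}^k$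 for all $k\in\mathbb N$, $i,j$. *)

(* Defs.v *)
From HB Require Import structures.
From mathcomp Require Import all_boot all_order all_algebra.
From mathcomp Require Import all_classical all_reals all_analysis.
From mathcomp Require Import complex.

Set Implicit Arguments.
Unset Strict Implicit.
Unset Printing Implicit Defensive.

Import Order.TTheory GRing.Theory Num.Theory.
Local Open Scope ring_scope.
Local Open Scope classical_set_scope.
Local Open Scope complex_scope.

Section Defs.
Variable R : realType.
Local Notation C := R[i].

Definition reC (z : C) : R := complex.Re z.
Definition imC (z : C) : R := complex.Im z.

Definition cmod (z : C) : R := Num.sqrt (reC z ^+ 2 + imC z ^+ 2).

Definition adjmx m n (A : 'M[C]_(m, n)) : 'M[C]_(n, m) := (map_mx Num.conj A)^T.

Definition cdot n (u v : 'cV[C]_n) : C := (adjmx u *m v) 0 0.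

Definition qform n (A : 'M[C]_n) (v : 'cV[C]_n) : C := (adjmx v *m A *m v) 0 0.

Definition supnorm n (v : 'cV[C]_n) : R := \big[Num.max/0]_(j < n) cmod (v j 0).

(** Macro states: a labelling blk : [D] -> [m] of indices by macro states,
    blocks I_nu = blk^-1(nu). *)
Definition consecutive_partition D m (blk : 'I_D -> 'I_m) : Prop :=
  (forall i j : 'I_D, (i <= j)%N -> (blk i <= blk j)%N) /\
  (forall nu : 'I_m, exists j : 'I_D, blk j = nu).

Definition dimM D m (blk : 'I_D -> 'I_m) (nu : 'I_m) : nat := #|[set j | blk j == nu]|.

(** orthogonal projection P_nu onto H_nu = span{|j> : j in I_nu} *)
Definition projM D m (blk : 'I_D -> 'I_m) (nu : 'I_m) : 'M[C]_D :=
  diag_mx (\row_j (if blk j == nu then 1 else 0)).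

Definition MB D m (blk : 'I_D -> 'I_m) (phi : 'I_D -> 'cV[C]_D) (mu : 'I_m)
    (B : 'M[C]_D) : C :=
  ((dimM blk mu)%:R)^-1 *
    \sum_(n < D) qform (projM blk mu) (phi n) * qform B (phi n).

Definition Mmn D m (blk : 'I_D -> 'I_m) (phi : 'I_D -> 'cV[C]_D) (mu nu : 'I_m) : C :=
  MB blk phi mu (projM blk nu).

(** Positive and negative parts of a Hermitian matrix via spectral calculus:
    B = U^* diag(b) U with U unitary (spectral theorem, mathcomp spectral.v),
    B^+ = U^* diag(max(b,0)) U, B^- = U^* diag(max(-b,0)) U. *)
Definition posmx D (B : 'M[C]_D) : 'M[C]_D :=
  adjmx (spectralmx B) *m
    diag_mx (\row_i ((Num.max (reC (spectral_diag B 0 i)) 0)%:C)) *m spectralmx B.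
Definition negmx D (B : 'M[C]_D) : 'M[C]_D :=
  adjmx (spectralmx B) *m
    diag_mx (\row_i ((Num.max (- reC (spectral_diag B 0 i)) 0)%:C)) *m spectralmx B.

Definition eig_min D (A : 'M[C]_D) : R := inf [set x : R | eigenvalue A x%:C].
Definition eig_max D (A : 'M[C]_D) : R := sup [set x : R | eigenvalue A x%:C].

Section Random.
Context {d : measure_display} {T : measurableType d} (P : probability T R).
Local Open Scope ereal_scope.

Definition sig2e D (h : T -> 'M[C]_D) (i j : 'I_D) : \bar R :=
  \int[P]_w ((cmod (h w i j) ^+ 2)%R)%:E.
Definition sig2 D (h : T -> 'M[C]_D) (i j : 'I_D) : R := fine (sig2e h i j).

(** the entries (h_ij)_{i<=j} (as R^2-valued random variables (Re, Im))
    are mutually independent *)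
Definition upper_entries_independent D (h : T -> 'M[C]_D) : Prop :=
  forall A : 'I_D -> 'I_D -> set (R * R)%type,
    (forall i j, measurable (A i j)) ->
    P (\bigcap_(k in [set k : 'I_D * 'I_D | (k.1 <= k.2)%N])
         [set w | (reC (h w k.1 k.2), imC (h w k.1 k.2)) \in A k.1 k.2]) =
    \prod_(k : 'I_D * 'I_D | (k.1 <= k.2)%N)
         P [set w | (reC (h w k.1 k.2), imC (h w k.1 k.2)) \in A k.1 k.2].

Definition S1 D (h : T -> 'M[C]_D) : Prop :=
  (forall w, h w \is hermsymmx) /\
  (forall i j, measurable_fun setT (fun w => (reC (h w i j), imC (h w i j)))) /\
  (forall i j, P.-integrable setT (fun w => (reC (h w i j))%:E) /\
               P.-integrable setT (fun w => (imC (h w i j))%:E) /\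
               \int[P]_w (reC (h w i j))%:E = 0 /\
               \int[P]_w (imC (h w i j))%:E = 0) /\
  upper_entries_independent h /\
  (forall i j, sig2e h i j <= ((D%:R)^-1)%:E).

Definition Smx D (h : T -> 'M[C]_D) : 'M[R]_D := \matrix_(i, j) sig2 h i j.

Definition S2 (p : R) (L : nat) D (h : T -> 'M[C]_D) : Prop :=
  forall i j, (p / D%:R <= (iter L (mulmx (Smx h)) 1%:M) i j)%R.

(** Assumption S3: the solution of the vector Dyson equation
    -1/m_i(z) = z + sum_j sigma_ij^2 m_j(z), m : H -> H^D, is bounded by P.
    (For each z in H this equation has a unique solution in H^D.) *)
Definition S3 (Pb : R) D (h : T -> 'M[C]_D) : Prop :=
  forall (z : C) (w : 'I_D -> C), (0 < imC z)%R ->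
    (forall i, (0 < imC (w i))%R /\
               (- (w i)^-1 = z + \sum_j (sig2 h i j)%:C * w j)%R) ->
    forall i, (cmod (w i) <= Pb)%R.

Definition S4 (mu : nat -> R) D (h : T -> 'M[C]_D) : Prop :=
  forall (k : nat) (i j : 'I_D), (0 < k)%N ->
    \int[P]_w ((cmod (h w i j) ^+ k)%R)%:E <=
      ((mu k) * (Num.sqrt (sig2 h i j)) ^+ k)%:E.

End Random.
End Defs.

(* Main.v *)
Set Warnings "-notation-overridden,-ambiguous-paths,-notation-incompatible-prefix,-deprecated".
Require Import Defs.
From HB Require Import structures.
From mathcomp Require Import all_boot all_order all_algebra.
From mathcomp Require Import all_classical all_reals all_analysis.
From mathcomp Require Import complex.
From mathcomp Require Import ring lra.
Set Implicit Arguments.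
Unset Strict Implicit.
Import Order.TTheory GRing.Theory Num.Theory.
Local Open Scope ring_scope.
Local Open Scope complex_scope.

Section Alg.
Variable R : realType.
Local Notation C := R[i].

Definition nsq (z : C) : R := reC z ^+ 2 + imC z ^+ 2.

Lemma nsq_ge0 z : 0 <= nsq z.
Proof. by rewrite /nsq addr_ge0 // sqr_ge0. Qed.

Lemma conjM (z : C) : Num.conj z * z = (nsq z)%:C.
Proof.
case: z => a b; rewrite /nsq /reC /imC /=.
apply/eqP; rewrite eq_complex /=; apply/andP; split; apply/eqP; ring.
Qed.

Lemma adjmxE m n (A : 'M[C]_(m, n)) : adjmx A = (A ^t* )%sesqui.
Proof. by rewrite /adjmx map_trmx. Qed.

Lemma adjmx_mul m n p (A : 'M[C]_(m, n)) (B : 'M[C]_(n, p)) :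
  adjmx (A *m B) = adjmx B *m adjmx A.
Proof. by rewrite /adjmx map_mxM trmx_mul. Qed.

Lemma adjmxK m n (A : 'M[C]_(m, n)) : adjmx (adjmx A) = A.
Proof.
apply/matrixP => i j; rewrite !mxE.
by rewrite conjCK.
Qed.

Lemma qform_diag n (c : 'I_n -> R) (v : 'cV[C]_n) :
  qform (diag_mx (\row_j (c j)%:C)) v = (\sum_j c j * nsq (v j 0))%:C.
Proof.
rewrite /qform mul_mx_diag mxE rmorph_sum /=; apply: eq_bigr => j _.
rewrite !mxE /= -mulrA mulrC -mulrA.
have -> : (v j 0 * Num.conj (v j 0)) = (nsq (v j 0))%:C by rewrite mulrC conjM.
by rewrite rmorphM mulrC.
Qed.

Lemma qform_conj n (Q A : 'M[C]_n) (v : 'cV[C]_n) :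
  qform (adjmx Q *m A *m Q) v = qform A (Q *m v).
Proof. by rewrite /qform adjmx_mul !mulmxA. Qed.

Lemma qformD n (A B : 'M[C]_n) v : qform (A + B) v = qform A v + qform B v.
Proof. by rewrite /qform mulmxDr mulmxDl mxE. Qed.

Lemma qformN n (A : 'M[C]_n) v : qform (- A) v = - qform A v.
Proof. by rewrite /qform mulmxN mulNmx mxE. Qed.

Lemma cdot_nsq n (v : 'cV[C]_n) : cdot v v = (\sum_j nsq (v j 0))%:C.
Proof.
have -> : cdot v v = qform (diag_mx (\row_j (1:R)%:C)) v.
  rewrite /cdot /qform; congr (_ 0 0).
  have -> : diag_mx (\row_j (1:R)%:C) = 1%:M :> 'M[C]_n.
    by apply/matrixP => i j; rewrite !mxE.
  by rewrite mulmx1.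
by rewrite qform_diag; under eq_bigr do rewrite mul1r.
Qed.


Lemma nsq_eq0 (z : C) : nsq z = 0 -> z = 0.
Proof.
case: z => a b; rewrite /nsq /reC /imC /= => h.
have ha : a ^+ 2 = 0 by apply/eqP; rewrite eq_le sqr_ge0 andbT -h lerDl sqr_ge0.
have hb : b ^+ 2 = 0 by move: h; rewrite ha add0r.
by move/eqP: ha; rewrite sqrf_eq0 => /eqP ->; move/eqP: hb; rewrite sqrf_eq0 => /eqP ->.
Qed.

Lemma cdot_mul n (Q : 'M[C]_n) (v : 'cV[C]_n) : adjmx Q *m Q = 1%:M ->
  \sum_i nsq ((Q *m v) i 0) = \sum_i nsq (v i 0).
Proof.
move=> hQ; apply: (@complexI R); rewrite -!cdot_nsq /cdot adjmx_mul.
by rewrite -mulmxA (mulmxA (adjmx Q)) hQ mul1mx.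
Qed.

Section Gen.
Variables (n : nat) (Q : 'M[C]_n) (c : 'I_n -> R).
Hypothesis hQ1 : Q *m adjmx Q = 1%:M.
Hypothesis hQ2 : adjmx Q *m Q = 1%:M.
Hypothesis hc : forall i, 0 <= c i.
Let A := adjmx Q *m diag_mx (\row_i (c i)%:C) *m Q.

Lemma G1 v : qform A v = (\sum_i c i * nsq ((Q *m v) i 0))%:C.
Proof. by rewrite /A qform_conj qform_diag. Qed.

Lemma G3 i : eigenvalue A (c i)%:C.
Proof.
apply/eigenvalueP; exists (row i Q).
  rewrite /A -row_mul !mulmxA hQ1 mul1mx row_mul row_diag_mx mxE.
  by rewrite -scalemxAl -rowE.
apply/negP => /eqP h.
have : row i (Q *m adjmx Q) = 0 by rewrite row_mul h mul0mx.
rewrite hQ1 => /rowP /(_ i); rewrite !mxE eqxx /= => /eqP.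
by rewrite oner_eq0.
Qed.

Lemma G4 x : eigenvalue A x%:C -> 0 <= x /\ x <= \sum_i c i.
Proof.
move=> /eigenvalueP [v hv vn0].
set u := adjmx v.
have e1 : qform A u = x%:C * (\sum_j nsq (u j 0))%:C.
  rewrite /qform /u adjmxK hv -scalemxAl mxE -cdot_nsq /cdot adjmxK.
  by [].
rewrite G1 -rmorphM /= in e1; move/complexI: e1 => e1.
set S := \sum_j nsq (u j 0) in e1.
have S0 : 0 <= S by apply: sumr_ge0 => j _; exact: nsq_ge0.
have Sn0 : S != 0.
  apply/negP => /eqP hs0; have hs := psumr_eq0P (fun j _ => nsq_ge0 _) hs0; move/negP: vn0; apply; apply/eqP/rowP => j.
  have := hs j isT => /nsq_eq0.
  rewrite /u !mxE => /eqP; rewrite conjC_eq0 => /eqP ->; by rewrite ?mxE.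
have Sp : 0 < S by rewrite lt_def Sn0 S0.
have T0 : 0 <= \sum_i c i * nsq ((Q *m u) i 0).
  by apply: sumr_ge0 => i _; rewrite mulr_ge0 ?nsq_ge0.
have T1 : \sum_i c i * nsq ((Q *m u) i 0) <= (\sum_i c i) * S.
  rewrite mulr_suml; apply: ler_sum => i _; apply: ler_wpM2l => //.
  rewrite /S -(cdot_mul u hQ2).
  rewrite (bigD1 i) //= lerDl; apply: sumr_ge0 => k _; exact: nsq_ge0.
split.
  by rewrite -(pmulr_lge0 _ Sp) -e1.
by rewrite -(ler_pM2r Sp) -e1.
Qed.

Lemma eig_min_le (v : 'cV[C]_n) : \sum_i nsq (v i 0) = 1 -> eig_min A <= reC (qform A v).
Proof.
move=> hv.
have lb : forall i, eig_min A <= c i.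
  move=> i; apply: (ge_inf _ (G3 i)).
  by exists 0 => y /G4 [].
rewrite G1 /reC /= -(cdot_mul v hQ2) in hv *.
rewrite -[eig_min A]mulr1 -hv mulr_sumr; apply: ler_sum => i _.
by rewrite ler_wpM2r ?nsq_ge0.
Qed.

Lemma eig_max_ge (v : 'cV[C]_n) : \sum_i nsq (v i 0) = 1 -> reC (qform A v) <= eig_max A.
Proof.
move=> hv.
have ub : forall i, c i <= eig_max A.
  move=> i; apply: (sup_upper_bound _ (G3 i)).
  split; first by exists (c i); exact: G3.
  by exists (\sum_i c i) => y /G4 [].
rewrite G1 /reC /= -(cdot_mul v hQ2) in hv *.
rewrite -[eig_max A]mulr1 -hv mulr_sumr; apply: ler_sum => i _.
by rewrite ler_wpM2r ?nsq_ge0.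
Qed.

Lemma qform_ge0 (v : 'cV[C]_n) : 0 <= reC (qform A v).
Proof.
by rewrite G1 /reC /=; apply: sumr_ge0 => i _; rewrite mulr_ge0 ?nsq_ge0.
Qed.

End Gen.

Section Spec.
Variables (n : nat) (B : 'M[C]_n).
Hypothesis hB : B \is hermsymmx.

Lemma specQ1 : spectralmx B *m adjmx (spectralmx B) = 1%:M.
Proof. by rewrite adjmxE; apply/unitarymxP; exact: spectral_unitarymx. Qed.

Lemma specQ2 : adjmx (spectralmx B) *m spectralmx B = 1%:M.
Proof. exact: mulmx1C specQ1. Qed.

Lemma posnegE : B = posmx B - negmx B.
Proof.
have hB' := hB; move/hermitian_normalmx/orthomx_spectralP: hB => e.
have eQ : invmx (spectralmx B) = adjmx (spectralmx B).
  by rewrite invmx_unitary ?spectral_unitarymx // adjmxE.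
rewrite eQ in e.
rewrite /posmx /negmx -mulmxBl -mulmxBr -linearB /=.
transitivity (adjmx (spectralmx B) *m diag_mx (spectral_diag B) *m spectralmx B); first exact: e.
congr (_ *m diag_mx _ *m _).
apply/rowP => i; rewrite !mxE.
have /mxOverP /(_ 0 i) hr := hermitian_spectral_diag_real hB'.
rewrite -(RRe_real hr) -rmorphB /=; congr (_%:C).
rewrite /reC; set x := complex.Re _.
by rewrite !maxEle; case: ifP => h1; case: ifP => h2; lra.
Qed.

End Spec.

Lemma reC_add (y z : C) : reC (y + z) = reC y + reC z.
Proof. by case: y; case: z. Qed.
Lemma reC_opp (z : C) : reC (- z) = - reC z.
Proof. by case: z. Qed.
Lemma reC_sum (I : Type) (r : seq I) (P : pred I) (F : I -> C) :
  reC (\sum_(i <- r | P i) F i) = \sum_(i <- r | P i) reC (F i).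
Proof. by apply: (big_morph _ reC_add). Qed.
Lemma reC_mulR (x : R) (z : C) : reC (x%:C * z) = x * reC z.
Proof. by case: z => a b; rewrite /reC /= mul0r subr0. Qed.
Lemma reC_R (x : R) : reC (x%:C) = x.
Proof. by []. Qed.
Lemma cmod_ge (z : C) : reC z <= cmod z.
Proof.
rewrite /cmod; apply: (le_trans (ler_norm _)); rewrite -sqrtr_sqr.
by apply: ler_wsqrtr; rewrite lerDl sqr_ge0.
Qed.

Lemma ineq (I : finType) (p a b : I -> R) (d e1 e2 c0 : R) :
  0 < d -> \sum_i p i = d -> (forall i, 0 <= p i /\ p i <= 1) ->
  (forall i, c0 <= p i) -> (forall i, e1 <= a i /\ 0 <= a i) ->
  (forall i, b i <= e2 /\ 0 <= b i) ->
  Num.max e1 ((\sum_i a i) / d * c0) - Num.min e2 ((\sum_i b i) / d)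
    <= d^-1 * \sum_i p i * (a i - b i).
Proof.
move=> d0 hp hp01 hc ha hb.
have -> : d^-1 * \sum_i p i * (a i - b i) =
   (\sum_i p i * a i) / d - (\sum_i p i * b i) / d.
  rewrite -mulrBl -sumrB mulrC; congr (_ * _); apply: eq_bigr => i _; ring.
have X1 : e1 <= (\sum_i p i * a i) / d.
  rewrite ler_pdivlMr // -hp mulr_sumr; apply: ler_sum => i _.
  by rewrite mulrC ler_wpM2l ?(hp01 i).1 ?(ha i).1.
have X2 : (\sum_i a i) / d * c0 <= (\sum_i p i * a i) / d.
  rewrite mulrAC; apply: ler_wpM2r; first by rewrite invr_ge0 ltW.
  rewrite mulr_suml; apply: ler_sum => i _.
  by rewrite mulrC ler_wpM2r ?(ha i).2.
have Y1 : (\sum_i p i * b i) / d <= e2.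
  rewrite ler_pdivrMr // -hp mulr_sumr; apply: ler_sum => i _.
  by rewrite [in X in _ <= X]mulrC ler_wpM2l ?(hp01 i).1 ?(hb i).1.
have Y2 : (\sum_i p i * b i) / d <= (\sum_i b i) / d.
  apply: ler_wpM2r; first by rewrite invr_ge0 ltW.
  apply: ler_sum => i _.
  by rewrite ler_piMl ?(hb i).2 ?(hp01 i).2.
have M1 : Num.max e1 ((\sum_i a i) / d * c0) <= (\sum_i p i * a i) / d.
  by rewrite ge_max X1 X2.
have M2 : (\sum_i p i * b i) / d <= Num.min e2 ((\sum_i b i) / d).
  by rewrite le_min Y1 Y2.
lra.
Qed.

Section Det.
Variables (D : nat) (phi : 'I_D -> 'cV[C]_D).
Hypothesis horth : forall n n' : 'I_D, cdot (phi n) (phi n') = (n == n')%:R.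

Let U : 'M[C]_D := \matrix_(j, n) phi n j 0.

Lemma UU1 : adjmx U *m U = 1%:M.
Proof.
apply/matrixP => n n'; transitivity (cdot (phi n) (phi n')); last by rewrite horth mxE.
rewrite /cdot !mxE.
by apply: eq_bigr => j _; rewrite !mxE.
Qed.

Lemma sum_qform (A : 'M[C]_D) : \sum_n qform A (phi n) = \tr A.
Proof.
have h2 : U *m adjmx U = 1%:M := mulmx1C UU1.
rewrite -[A in RHS]mulmx1 -h2 mulmxA mxtrace_mulC mulmxA /mxtrace.
by apply: eq_bigr => n _; rewrite /qform !mxE; apply: eq_bigr => k _;
  rewrite !mxE; congr (_ * _); apply: eq_bigr => j _; rewrite !mxE.
Qed.

Lemma rowsum (n : 'I_D) : \sum_j nsq (phi n j 0) = 1.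
Proof. by apply: (@complexI R); rewrite -cdot_nsq horth eqxx. Qed.


Variables (m : nat) (blk : 'I_D -> 'I_m).
Definition ind (mu : 'I_m) (j : 'I_D) : R := if blk j == mu then 1 else 0.
Definition pf (mu : 'I_m) (n : 'I_D) : R := \sum_j ind mu j * nsq (phi n j 0).

Lemma ind_ge0 mu j : 0 <= ind mu j.
Proof. by rewrite /ind; case: ifP. Qed.
Lemma ind_le1 mu j : ind mu j <= 1.
Proof. by rewrite /ind; case: ifP. Qed.

Lemma projM_diag mu : projM R blk mu = diag_mx (\row_j (ind mu j)%:C).
Proof.
apply/matrixP => i j; rewrite !mxE /ind.
by case: (blk i == mu).
Qed.

Lemma sum_ind mu : \sum_j ind mu j = (dimM blk mu)%:R.
Proof.
rewrite /ind -big_mkcond /= sumr_const /dimM.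
congr (_%:R); apply: eq_card => j; apply/idP/idP; rewrite in_setE /=; [rewrite unfold_in /= => h|move=> h; rewrite unfold_in /=]. by []. by [].
Qed.

Lemma qform_projM mu n : qform (projM R blk mu) (phi n) = (pf mu n)%:C.
Proof. by rewrite projM_diag qform_diag. Qed.

Lemma sum_pf mu : \sum_n pf mu n = (dimM blk mu)%:R.
Proof.
apply: (@complexI R); rewrite rmorph_sum /=.
under eq_bigr do rewrite -qform_projM.
rewrite sum_qform projM_diag mxtrace_diag -sum_ind rmorph_sum /=.
by apply: eq_bigr => j _; rewrite mxE.
Qed.

Lemma pf_ge0 mu n : 0 <= pf mu n.
Proof. by apply: sumr_ge0 => j _; rewrite mulr_ge0 ?ind_ge0 ?nsq_ge0. Qed.

Lemma pf_le1 mu n : pf mu n <= 1.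
Proof.
rewrite -(rowsum n); apply: ler_sum => j _.
by rewrite ler_piMl ?nsq_ge0 ?ind_le1.
Qed.

Variable (eps : R).
Hypothesis heps : forall n j, nsq (phi n j 0) <= eps.

Lemma pf_lb mu n : 1 - (D%:R - (dimM blk mu)%:R) * eps <= pf mu n.
Proof.
have e : 1 - pf mu n = \sum_j (1 - ind mu j) * nsq (phi n j 0).
  rewrite /pf -[in LHS](rowsum n) -sumrB; apply: eq_bigr => j _; ring.
have e2 : \sum_j (1 - ind mu j) = D%:R - (dimM blk mu)%:R.
  by rewrite sumrB sum_ind sumr_const card_ord.
suff : 1 - pf mu n <= (D%:R - (dimM blk mu)%:R) * eps by lra.
rewrite e -e2 mulr_suml; apply: ler_sum => j _; apply: ler_wpM2l.
  by rewrite subr_ge0 ind_le1.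
exact: heps.
Qed.


Lemma natC k : (k%:R : C) = (k%:R : R)%:C.
Proof. by rewrite rmorph_nat. Qed.

Lemma Mmn_eq mu nu : Mmn blk phi mu nu =
  (((dimM blk mu)%:R)^-1 * \sum_n pf mu n * pf nu n)%:C.
Proof.
rewrite /Mmn /MB natC -fmorphV /= rmorphM rmorph_sum /=; congr (_ * _).
by apply: eq_bigr => n _; rewrite !qform_projM rmorphM.
Qed.

Lemma Mmn_lb1 mu nu : (0 < dimM blk mu)%N ->
  (((dimM blk nu)%:R / (dimM blk mu)%:R
     * (1 - (D%:R - (dimM blk mu)%:R) * eps))%:C <= Mmn blk phi mu nu).
Proof.
move=> hd; rewrite Mmn_eq lecR.
have dp : 0 < ((dimM blk mu)%:R : R) by rewrite ltr0n.
rewrite mulrAC mulrC; apply: ler_wpM2l; first by rewrite invr_ge0 ltW.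
rewrite -sum_pf mulr_suml; apply: ler_sum => n _.
by rewrite [in X in _ <= X]mulrC ler_wpM2l ?pf_ge0 ?pf_lb.
Qed.

Lemma Mmn_lb2 mu nu : (0 < dimM blk mu)%N ->
  ((1 - (D%:R - (dimM blk nu)%:R) * eps)%:C <= Mmn blk phi mu nu).
Proof.
move=> hd; rewrite Mmn_eq lecR.
have dp : 0 < ((dimM blk mu)%:R : R) by rewrite ltr0n.
rewrite -(ler_pM2l dp) mulrA mulfV ?lt0r_neq0 // mul1r.
rewrite -sum_pf mulr_suml; apply: ler_sum => n _.
by rewrite ler_wpM2l ?pf_ge0 ?pf_lb.
Qed.

Lemma qformB (B : 'M[C]_D) (v : 'cV[C]_D) : B \is hermsymmx ->
  qform B v = qform (posmx B) v - qform (negmx B) v.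
Proof. by move=> hB; rewrite {1}(posnegE hB) qformD qformN. Qed.

Lemma MB_lb mu B : B \is hermsymmx -> (0 < dimM blk mu)%N ->
  Num.max (eig_min (posmx B))
     (reC (\tr (posmx B)) / (dimM blk mu)%:R * (1 - (D%:R - (dimM blk mu)%:R) * eps))
  - Num.min (eig_max (negmx B)) (reC (\tr (negmx B)) / (dimM blk mu)%:R)
  <= cmod (MB blk phi mu B).
Proof.
move=> hB hd; apply: le_trans (cmod_ge _).
have dp : 0 < ((dimM blk mu)%:R : R) by rewrite ltr0n.
have -> : reC (MB blk phi mu B) = ((dimM blk mu)%:R)^-1 *
   \sum_n pf mu n * (reC (qform (posmx B) (phi n)) - reC (qform (negmx B) (phi n))).
  rewrite /MB natC -fmorphV /= reC_mulR reC_sum; congr (_ * _).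
  by apply: eq_bigr => n _; rewrite qform_projM reC_mulR (qformB _ hB) reC_add reC_opp.
rewrite -!sum_qform !reC_sum.
have Q1 := specQ1 B; have Q2 := specQ2 B.
have cp0 : forall i, 0 <= Num.max (reC (spectral_diag B 0 i)) 0 by move=> i; rewrite le_max lexx orbT.
have cn0 : forall i, 0 <= Num.max (- reC (spectral_diag B 0 i)) 0 by move=> i; rewrite le_max lexx orbT.
apply: ineq => //.
- exact: sum_pf.
- by move=> n; rewrite pf_ge0 pf_le1.
- by move=> n; exact: pf_lb.
- move=> n; split; first exact: (eig_min_le Q1 Q2 cp0 (rowsum n)).
  exact: (qform_ge0 (spectralmx B) cp0 (phi n)).
- move=> n; split; first exact: (eig_max_ge Q1 Q2 cn0 (rowsum n)).
  exact: (qform_ge0 (spectralmx B) cn0 (phi n)).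
Qed.

End Det.
End Alg.

Local Open Scope ring_scope.
Local Open Scope classical_set_scope.

Section Prob.
Variable R : realType.

Lemma prob_part d (T : measurableType d) (P : probability T R) (D : nat)
  (f : 'I_D -> T -> R) (c q : R) :
  (forall n, measurable_fun setT (f n)) ->
  (forall n, (P [set w | (c < f n w)%R] <= q%:E)%E) ->
  exists E, measurable E /\ ((1 - D%:R * q)%:E <= P E)%E /\
     forall w, E w -> forall n, f n w <= c.
Proof.
move=> mf hq.
pose F (n : 'I_D) := [set w | c < f n w].
pose A (k : nat) := oapp F set0 (insub k).
have FA : forall n : 'I_D, A n = F n by move=> n; rewrite /A valK.
have mF : forall n, measurable (F n).
  move=> n; have := mf n measurableT _ (measurable_itv `]c, +oo[%R).
  rewrite setTI; congr measurable; apply/seteqP; split => w /=;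
  by rewrite in_itv /= andbT.
have mA : forall k, measurable (A k).
  by move=> k; rewrite /A; case: insub => [n|] /=.
pose U := \big[setU/set0]_(i < D) A i.
have mU : measurable U by apply: bigsetU_measurable => i _.
exists (~` U); split; first exact: measurableC.
split; last first.
  move=> w hw n; rewrite leNgt; apply/negP => h; apply: hw.
  rewrite /U -bigcup_mkord; exists (val n) => //=; rewrite FA.
  exact: h.
rewrite probability_setC //.
have B1 : (P U <= \sum_(i < D) P (A i))%E by apply: Boole_inequality.
have B2 : (\sum_(i < D) P (A i) <= (D%:R * q)%:E)%E.
  have -> : ((D%:R * q)%:E = \sum_(i < D) q%:E)%E.
    by rewrite sumEFin sumr_const card_ord mulr_natl.
  by apply: lee_sum => i _; rewrite FA; exact: hq.
have U0 : (0 <= P U)%E := measure_ge0 _ _.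
have U1 : (P U <= 1)%E := probability_le1 _ mU.
have fU : P U \is a fin_num.
  by rewrite ge0_fin_numE // (le_lt_trans U1) // ltey.
rewrite -(fineK fU) -EFinB lee_fin lerB //.
by rewrite -lee_fin fineK // (le_trans B1 B2).
Qed.

Lemma supnorm_meas d (T : measurableType d) (D : nat) (f : T -> 'cV[R[i]]_D) :
  (forall j, measurable_fun setT (fun w => reC (f w j 0)) /\
             measurable_fun setT (fun w => imC (f w j 0))) ->
  measurable_fun setT (fun w => supnorm (f w)).
Proof.
move=> hm; rewrite /supnorm.
elim: (index_enum _) => [|j s IH].
  under eq_fun do rewrite big_nil; exact: measurable_cst.
under eq_fun do rewrite big_cons.
apply: measurable_realfun.measurable_maxr => //.
apply: (measurableT_comp (measurable_realfun.continuous_measurable_fun (@sqrt_continuous R))).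
by apply: measurable_realfun.measurable_funD; apply: measurable_realfun.measurable_funX; case: (hm j).
Qed.

End Prob.

Unset Implicit Arguments.
Set Strict Implicit.
Local Open Scope ring_scope.
Local Open Scope classical_set_scope.
Local Open Scope complex_scope.

Theorem mainTheorem12
  (R : realType)
  (p Pb : R) (L : nat) (mu : nat -> R)
  (hp : 0 < p) (hPb : 0 < Pb) (hmu : forall k, 0 <= mu k)
  (* for each D, a probability space and a random Hermitian matrix H^(D) *)
  (dsp : nat -> measure_display) (Omega : forall D : nat, measurableType (dsp D))
  (Pr : forall D : nat, probability (Omega D) R)
  (H : forall D : nat, Omega D -> 'M[R[i]]_D)
  (hS1 : forall D, S1 (Pr D) (H D))
  (hS2 : forall D, S2 (Pr D) p L (H D))
  (hS3 : forall D, S3 (Pr D) Pb (H D))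
  (hS4 : forall D, S4 (Pr D) mu (H D))
  (* an orthonormal eigenbasis phi_1..phi_D of H^(D), with eigenvalues lam *)
  (phi : forall D : nat, Omega D -> 'I_D -> 'cV[R[i]]_D)
  (lam : forall D : nat, Omega D -> 'I_D -> R)
  (heig : forall D w n, H D w *m phi D w n = (lam D w n)%:C *: phi D w n)
  (horth : forall D w (n n' : 'I_D), cdot (phi D w n) (phi D w n') = (n == n')%:R)
  (hphim : forall D (n j : 'I_D),
     measurable_fun setT (fun w => reC (phi D w n j 0)) /\
     measurable_fun setT (fun w => imC (phi D w n j 0)))
  (* delocalization function D_0 *)
  (D0 : R -> R -> nat)
  (hD0 : forall (tau alpha : R), 0 < tau -> 0 < alpha ->
     forall D : nat, (D0 tau alpha <= D)%N -> forall n : 'I_D,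
       (Pr D [set w | (D%:R `^ (tau - 2^-1) < supnorm (phi D w n))%R]
          <= (D%:R `^ (- alpha))%:E)%E)
  (tau alpha : R) (htau : 0 < tau) (halpha : 1 < alpha)
  (D : nat) (hD : (D0 tau alpha <= D)%N)
  (B : 'M[R[i]]_D) (hB : B \is hermsymmx)
  (* macro states: partition of [D] into consecutive blocks *)
  (m : nat) (blk : 'I_D -> 'I_m) (hblk : consecutive_partition blk) :
  exists E : set (Omega D),
    measurable E /\
    ((1 - D%:R `^ (1 - alpha))%:E <= Pr D E)%E /\
    forall w, E w ->
      (forall muM : 'I_m,
         Num.max (eig_min (posmx B))
                 (reC (\tr (posmx B)) / (dimM blk muM)%:R
                   * (1 - (D%:R - (dimM blk muM)%:R) / D%:R `^ (1 - 2 * tau)))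
         - Num.min (eig_max (negmx B)) (reC (\tr (negmx B)) / (dimM blk muM)%:R)
         <= cmod (MB blk (phi D w) muM B)) /\
      (forall muM nuM : 'I_m,
         (((dimM blk nuM)%:R / (dimM blk muM)%:R
             * (1 - (D%:R - (dimM blk muM)%:R) / D%:R `^ (1 - 2 * tau)))%:C
            <= Mmn blk (phi D w) muM nuM) /\
         ((1 - (D%:R - (dimM blk nuM)%:R) / D%:R `^ (1 - 2 * tau))%:C
            <= Mmn blk (phi D w) muM nuM)).
Proof.
set c := D%:R `^ (tau - 2^-1).
set eps := (D%:R `^ (1 - 2 * tau))^-1.
have al0 : 0 < alpha by apply: lt_trans halpha.
have hq := hD0 tau alpha htau al0 D hD.
have [E [mE [PE HE]]] := @prob_part R _ _ (Pr D) D
   (fun n w => supnorm (phi D w n)) c (D%:R `^ (- alpha))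
   (fun n => supnorm_meas (fun j => hphim D n j)) hq.
exists E; split => //; split.
  apply: le_trans PE; rewrite lee_fin lerB //.
  have [->|Dn0] := eqVneq D 0%N; first by rewrite mul0r powR_ge0.
  have hD' : (D%:R : R) != 0 by rewrite pnatr_eq0.
  rewrite powRD; last by rewrite hD' implybT.
  by rewrite powRr1 // ler0n.
move=> w Ew.
have hs := HE w Ew.
have heps : forall n j : 'I_D, nsq (phi D w n j 0) <= eps.
  move=> n j.
  have cle : cmod (phi D w n j 0) <= c.
    apply: le_trans (hs n); rewrite /supnorm.
    exact: (le_bigmax 0 (fun j => cmod (phi D w n j 0)) j).
  have -> : nsq (phi D w n j 0) = cmod (phi D w n j 0) ^+ 2.
    by rewrite /cmod sqr_sqrtr // nsq_ge0.
  have c0 : 0 <= cmod (phi D w n j 0) by exact: sqrtr_ge0.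
  apply: le_trans (_ : c ^+ 2 <= eps).
    by rewrite ler_pXn2r // ?nnegrE // (le_trans c0).
  rewrite /c -powR_mulrn ?powR_ge0 // -powRrM /eps -powRN.
  have -> : (tau - 2^-1) * 2 = - (1 - 2 * tau) by field. by [].
have dpos : forall mu0, (0 < dimM blk mu0)%N.
  move=> mu0; have [j hj] := hblk.2 mu0.
  have := sum_ind R blk mu0; rewrite (bigD1 j) //= /ind hj eqxx => e.
  have : (1 : R) <= (dimM blk mu0)%:R.
    rewrite -e lerDl; apply: sumr_ge0 => k _; exact: ind_ge0.
  by rewrite ler1n.
split.
  move=> muM; exact: (MB_lb (horth D w) heps hB (dpos muM)).
move=> muM nuM; split.
  exact: (Mmn_lb1 (horth D w) heps nuM (dpos muM)).
exact: (Mmn_lb2 (horth D w) heps nuM (dpos muM)).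
Qed.
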